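(* Suppose the gain matrix $V$ is irreducible. Then the max-min SIR-balancing problem $\max_{p\in\mathcal P}\min_{k\in\mathcal K}\mathrm{SIR}_k(p)/\gamma_k$ has a unique maximizer $\bar p$, and $\bar p=\bar p'$, where $\bar p'=(\frac{1}{t'}I-\Gamma V)^{-1}\Gamma z$ and $t'$ is the largest $t>0$ for which there exists $p\in\mathcal P$ with $(\frac1t I-\Gamma V)p=\Gamma z$. In particular $\bar p>0$.
   Context: Network model: $K\ge 2$ links, $\mathcal K=\{1,\dots,K\}$. Power constraint set $\mathcal P=\{p\in\mathbb R_+^K: Cp\le\hat p\}$, where $C\in\{0,1\}^{N\times K}$ has at least one entry equal to $1$ in each column and $\hat p=(P_1,\dots,P_N)\in\mathbb R_{++}^N$. Gain matrix $V\in\mathbb R_+^{K\times K}$ with zero diagonal, noise vector $z\in\mathbb R_{++}^K$, $\mathrm{SIR}_k(p)=p_k/((Vp)_k+z_k)$. SIR targets $\gamma_1,\dots,\gamma_K>0$ and $\Gamma=\mathrm{diag}(\gamma_1,\dots,\gamma_K)$. *)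

(* Defs.v *)
From HB Require Import structures.
From mathcomp Require Import all_boot all_order all_algebra.
Set Implicit Arguments. Unset Strict Implicit. Unset Printing Implicit Defensive.
Import Order.TTheory GRing.Theory Num.Theory.
Local Open Scope ring_scope.

(* The neutral element
   used for the big operator is the maximum of 0 and all values, which is an
   upper bound of every f i, hence does not affect the result when n >= 1. *)
Definition minval (R : realFieldType) (n : nat) (f : 'I_n -> R) : R :=
  \big[Num.min/ \big[Num.max/0]_(i < n) f i]_(i < n) f i.

(* Irreducibility of a square matrix: there is no nonempty proper index set T
   such that V k l = 0 for all k in T and l not in T (equivalently, V cannot
   be brought to block upper-triangular form by a simultaneous permutation of
   rows and columns). *)
Definition irreducible_mx (R : realFieldType) (K : nat) (V : 'M[R]_K) : Prop :=
  ~ exists T : {set 'I_K},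
      [/\ T != set0, T != setT &
          forall k l, k \in T -> l \notin T -> V k l = 0].

Definition powset (R : realFieldType) (N K : nat) (C : 'M[R]_(N, K))
  (phat : 'cV[R]_N) (p : 'cV[R]_K) : Prop :=
  (forall k, 0 <= p k 0) /\ (forall n, (C *m p) n 0 <= phat n 0).

Definition SIR (R : realFieldType) (K : nat) (V : 'M[R]_K) (z : 'cV[R]_K)
  (p : 'cV[R]_K) (k : 'I_K) : R :=
  p k 0 / ((V *m p) k 0 + z k 0).

Definition balance_obj (R : realFieldType) (K : nat) (V : 'M[R]_K)
  (z : 'cV[R]_K) (gamma : 'I_K -> R) (p : 'cV[R]_K) : R :=
  minval (fun k => SIR V z p k / gamma k).

Definition Gammamx (R : realFieldType) (K : nat) (gamma : 'I_K -> R) : 'M[R]_K :=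
  diag_mx (\row_k gamma k).

Definition Amx (R : realFieldType) (K : nat) (V : 'M[R]_K)
  (gamma : 'I_K -> R) (t : R) : 'M[R]_K :=
  t^-1%:M - Gammamx gamma *m V.

(* Main.v *)
Require Import Defs.
From HB Require Import structures.
From mathcomp Require Import all_boot all_order all_algebra.
From Stdlib Require Import Classical.
Import Order.TTheory GRing.Theory Num.Theory.
Set Implicit Arguments. Unset Strict Implicit. Unset Printing Implicit Defensive.
Local Open Scope ring_scope.

Lemma roots_list (R : idomainType) (F : {poly R}) :
  F != 0 -> exists l : seq R, forall x, root F x -> x \in l.
Proof.
move: {2}(size F) (leqnn (size F)) => n; elim: n F => [|n IH] F hs hF.
  by move: hs; rewrite leqn0 size_poly_eq0 (negPf hF).
have [[a ha]|na] := classic (exists a, root F a); last first.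
  by exists [::] => x hx; case: na; exists x.
case/factor_theorem: (ha) => G hG.
have hG0 : G != 0 by apply/eqP => G0; move: hF; rewrite hG G0 mul0r eqxx.
have hsG : (size G <= n)%N.
  move: hs; rewrite hG size_Mmonic ?monicXsubC // size_XsubC addn2.
  by [].
have [l hl] := IH G hsG hG0.
exists (a :: l) => x; rewrite hG rootM root_XsubC inE => /orP [/hl -> | ->];
  by rewrite ?orbT ?eqxx.
Qed.

Lemma max_in_list (R : realDomainType) (A : R -> Prop) (l : seq R) :
  (forall x, A x -> x \in l) -> (exists x, A x) ->
  exists x, A x /\ forall y, A y -> y <= x.
Proof.
elim: l A => [|a l IH] A hA [x0 hx0]; first by move: (hA _ hx0).
pose A' x := A x /\ x <> a.
have [[x1 hx1]|nA'] := classic (exists x, A' x).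
  have hA' : forall x, A' x -> x \in l.
    by move=> x [/hA]; rewrite inE => /orP [/eqP -> //|].
  have [m [[Am _] hm]] := IH A' hA' (ex_intro _ x1 hx1).
  have [Aa|nAa] := classic (A a).
    have [le_am|lt_ma] := lerP a m.
      exists m; split=> // y Ay; have [->//|ya] := classic (y = a).
      by apply: hm.
    exists a; split=> // y Ay; have [->//|ya] := classic (y = a).
    by apply: le_trans (hm y (conj Ay ya)) (ltW lt_ma).
  exists m; split=> // y Ay; apply: hm; split=> // ya; by rewrite ya in Ay.
have Aa : A a.
  apply: NNPP => nAa; apply: nA'; exists x0; split=> // x0a; by rewrite x0a in hx0.
exists a; split=> // y Ay; apply: NNPP => nle.
apply: nA'; exists y; split=> // ya; apply: nle; by rewrite ya.
Qed.

Lemma min_in_list (R : realDomainType) (A : R -> Prop) (l : seq R) :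
  (forall x, A x -> x \in l) -> (exists x, A x) ->
  exists x, A x /\ forall y, A y -> x <= y.
Proof.
move=> hl [x0 hx0].
have := @max_in_list R (fun x => A (- x)) (map -%R l).
case.
- move=> x Ax; apply/mapP; exists (- x); first exact: hl.
  by rewrite opprK.
- by exists (- x0); rewrite opprK.
move=> m [Am hm]; exists (- m); split=> // y Ay.
by rewrite lerNl; apply: hm; rewrite opprK.
Qed.

Lemma ivt_neg (R : rcfType) (G : {poly R}) a b :
  a <= b -> G.[a] < 0 -> 0 < G.[b] -> exists2 x, a < x <= b & root G x.
Proof.
move=> hab ha hb; have [x /andP [h1 h2] hx] := @poly_ivt R G a b hab
  (introT andP (conj (ltW ha) (ltW hb))).
exists x => //; rewrite h2 andbT lt_neqAle h1 andbT.
by apply/eqP => ax; move: hx; rewrite -ax rootE (lt_eqF ha).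
Qed.

Lemma sign_helper (R : rcfType) (G : {poly R}) r s :
  (forall x, r < x <= s -> ~~ root G x) -> 0 < G.[s] ->
  forall u, r <= u <= s -> 0 <= G.[u] /\ (r < u -> 0 < G.[u]).
Proof.
move=> hr hs u /andP [ru us].
have hge : 0 <= G.[u].
  rewrite leNgt; apply/negP => hneg.
  have [x /andP [ux xs] hx] := ivt_neg us hneg hs.
  by move: (hr x); rewrite (le_lt_trans ru ux) xs hx => /(_ isT).
split=> // rlu; rewrite lt_neqAle hge andbT eq_sym.
by have := hr u; rewrite rlu us rootE => /(_ isT).
Qed.

Lemma sign_helperN (R : rcfType) (G : {poly R}) r s :
  (forall x, r < x <= s -> ~~ root G x) -> G.[s] <= 0 ->
  forall u, r <= u <= s -> G.[u] <= 0.
Proof.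
move=> hr hs u hu.
have [G0|Gs] := eqVneq G.[s] 0.
  have : r < s -> False by move=> rs; move: (hr s); rewrite rs lexx rootE G0 eqxx => /(_ isT).
  move=> nrs; case/andP: hu => ru us.
  have su : s <= u.
    rewrite leNgt; apply/negP => us'.
    by apply: nrs; apply: le_lt_trans ru us'.
  by have -> : u = s by apply/le_anti; rewrite us su.
have := @sign_helper R (- G) r s.
rewrite hornerN oppr_gt0 lt_neqAle Gs hs => /(_ _ isT u hu) [].
  by move=> x /hr; rewrite rootN.
by rewrite hornerN oppr_ge0.
Qed.

Lemma AmulE (R : comNzRingType) K (M : 'M[R]_K) s (x : 'cV[R]_K) k :
  ((s%:M - M) *m x) k 0 = s * x k 0 - \sum_j M k j * x j 0.
Proof. by rewrite mulmxBl mul_scalar_mx !mxE. Qed.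

Lemma PL (R : realFieldType) K (M : 'M[R]_K) s (x y : 'cV[R]_K) :
  (forall i j, 0 <= M i j) -> (forall k, 0 < x k 0) ->
  (forall k, 0 < ((s%:M - M) *m x) k 0) ->
  (forall k, 0 <= ((s%:M - M) *m y) k 0) -> forall k, 0 <= y k 0.
Proof.
move=> hM hx hAx hAy k; rewrite leNgt; apply/negP => hyk.
pose F i := y i 0 / x i 0.
have [k0 _ hmin] : extremum_spec <=%O predT F (Order.arg_min k predT F) :=
  arg_minP F (isT : predT k).
set m := F k0.
have mneg : m < 0.
  apply: le_lt_trans (hmin k isT) _; by rewrite /F ltr_pdivrMr // mul0r.
have hj j : m * x j 0 <= y j 0 by rewrite -ler_pdivlMr //; apply: hmin.
have hy0 : y k0 0 = m * x k0 0 by rewrite /m /F divfK // gt_eqF.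
have h1 := hAy k0; have h2 := hAx k0; rewrite AmulE in h1; rewrite AmulE in h2.
have h3 : m * (\sum_j M k0 j * x j 0) <= \sum_j M k0 j * y j 0.
  rewrite mulr_sumr; apply: ler_sum => j _.
  by rewrite mulrCA; apply: ler_wpM2l.
have h4 : m * (s * x k0 0) < m * (\sum_j M k0 j * x j 0).
  by rewrite ltr_nM2l // -subr_gt0.
move: h1; rewrite subr_ge0 hy0 mulrCA => h1.
have := lt_le_trans h4 (le_trans h3 h1); by rewrite ltxx.
Qed.

Lemma unitPL (R : realFieldType) K (M : 'M[R]_K) s (x : 'cV[R]_K) :
  (forall i j, 0 <= M i j) -> (forall k, 0 < x k 0) ->
  (forall k, 0 < ((s%:M - M) *m x) k 0) -> (s%:M - M) \in unitmx.
Proof.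
move=> hM hx hAx; rewrite unitmxE unitfE -det_tr; apply/negP => /det0P [v nv0 hv].
have hv' : (s%:M - M) *m v^T = 0.
  by rewrite -[LHS]trmxK trmx_mul trmxK hv trmx0.
have h1 := PL hM hx hAx (y := v^T).
have h2 := PL hM hx hAx (y := - v^T).
move/eqP: nv0; apply; apply/matrixP => i j.
rewrite (ord1 i) mxE; apply/le_anti.
have a1 : 0 <= v^T j 0 by apply: h1 => k; rewrite hv' mxE.
have a2 : 0 <= (- v^T) j 0 by apply: h2 => k; rewrite mulmxN hv' oppr0 mxE.
move: a1 a2; rewrite !mxE oppr_ge0 => -> ->; by [].
Qed.
Definition feas (R : realFieldType) (N K : nat) (C : 'M[R]_(N,K))
  (phat : 'cV[R]_N) (M : 'M[R]_K) (w : 'cV[R]_K) (s : R) : Prop :=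
  exists p, powset C phat p /\ (s%:M - M) *m p = w.

Lemma feasP (R : realFieldType) (N K : nat) (C : 'M[R]_(N,K))
  (phat : 'cV[R]_N) (M : 'M[R]_K) (w : 'cV[R]_K) (s : R) p (k0 : 'I_K) :
  (forall i j, 0 <= M i j) -> (forall k, 0 < w k 0) ->
  powset C phat p -> (s%:M - M) *m p = w ->
  [/\ 0 < s, forall k, 0 < p k 0, (s%:M - M) \in unitmx &
      p = invmx (s%:M - M) *m w].
Proof.
move=> hM hw [hp0 hpC] hA.
have hpos k : 0 < s * p k 0.
  have := hw k; rewrite -hA AmulE subr_gt0 => h; apply: le_lt_trans h.
  by apply: sumr_ge0 => j _; apply: mulr_ge0.
have hp k : 0 < p k 0.
  rewrite lt_neqAle hp0 andbT; apply/eqP => e; by move: (hpos k); rewrite -e mulr0 ltxx.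
have hAx k : 0 < ((s%:M - M) *m p) k 0 by rewrite hA.
have hU := unitPL hM hp hAx.
split=> //; last by rewrite -hA mulKmx.
by have := hpos k0; rewrite pmulr_lgt0.
Qed.

Lemma geq_feas (R : realFieldType) (N K : nat) (C : 'M[R]_(N,K))
  (phat : 'cV[R]_N) (M : 'M[R]_K) (w : 'cV[R]_K) (s : R) p :
  (forall i j, 0 <= M i j) -> (forall k, 0 < w k 0) ->
  (forall n k, 0 <= C n k) ->
  powset C phat p -> (forall k, w k 0 <= ((s%:M - M) *m p) k 0) ->
  feas C phat M w s.
Proof.
move=> hM hw hC [hp0 hpC] hA.
have hpos k : 0 < s * p k 0.
  move: (hA k); rewrite AmulE => h.
  have := lt_le_trans (hw k) h; rewrite subr_gt0 => h'; apply: le_lt_trans h'.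
  by apply: sumr_ge0 => j _; apply: mulr_ge0.
have hp k : 0 < p k 0.
  rewrite lt_neqAle hp0 andbT; apply/eqP => e; by move: (hpos k); rewrite -e mulr0 ltxx.
have hAx k : 0 < ((s%:M - M) *m p) k 0 by apply: lt_le_trans (hw k) (hA k).
have hU := unitPL hM hp hAx.
set p' := invmx (s%:M - M) *m w.
have hAp' : (s%:M - M) *m p' = w by rewrite mulKVmx.
have hp'0 : forall k, 0 <= p' k 0.
  by apply: (PL hM hp hAx) => k; rewrite hAp'; apply: ltW.
have hd : forall k, 0 <= (p - p') k 0.
  apply: (PL hM hp hAx) => k; rewrite mulmxBr hAp' !mxE subr_ge0.
  by have := hA k; rewrite mxE.
exists p'; split=> //; split=> // n; apply: le_trans (hpC n).
rewrite !mxE; apply: ler_sum => j _; apply: ler_wpM2l => //.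
by move: (hd j); rewrite !mxE subr_ge0.
Qed.

Lemma feas_mono (R : realFieldType) (N K : nat) (C : 'M[R]_(N,K))
  (phat : 'cV[R]_N) (M : 'M[R]_K) (w : 'cV[R]_K) (s s' : R) :
  (forall i j, 0 <= M i j) -> (forall k, 0 < w k 0) ->
  (forall n k, 0 <= C n k) ->
  feas C phat M w s -> s <= s' -> feas C phat M w s'.
Proof.
move=> hM hw hC [p [pP hA]] ss'; apply: (geq_feas hM hw hC pP) => k.
rewrite -hA !AmulE lerD2r; apply: ler_wpM2r => //.
by case: pP.
Qed.

Definition av (R : comNzRingType) K (M : 'M[R]_K) (w : 'cV[R]_K) :
  'cV[{poly R}]_K := \adj (char_poly_mx M) *m map_mx polyC w.

Definition qp (R : comNzRingType) N K (C : 'M[R]_(N,K)) (phat : 'cV[R]_N)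
  (M : 'M[R]_K) (w : 'cV[R]_K) (n : 'I_N) : {poly R} :=
  (map_mx polyC C *m av M w) n 0 - (phat n 0)%:P * char_poly M.

Lemma eval_Xm (R : comNzRingType) K (M : 'M[R]_K) u :
  map_mx (horner_eval u) (char_poly_mx M) = u%:M - M.
Proof.
apply/matrixP => i j; rewrite !mxE /horner_eval.
by rewrite hornerD hornerN hornerMn hornerX hornerC.
Qed.

Lemma eval_chi (R : comNzRingType) K (M : 'M[R]_K) u :
  (char_poly M).[u] = \det (u%:M - M).
Proof. by rewrite -horner_evalE -det_map_mx eval_Xm. Qed.

Lemma map_polyC_eval (R : comNzRingType) m n (A : 'M[R]_(m,n)) u :
  map_mx (horner_eval u) (map_mx polyC A) = A.
Proof. by apply/matrixP => i j; rewrite !mxE /horner_eval hornerC. Qed.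

Lemma eval_av (R : comNzRingType) K (M : 'M[R]_K) (w : 'cV[R]_K) u k :
  (av M w k 0).[u] = (\adj (u%:M - M) *m w) k 0.
Proof.
have E : map_mx (horner_eval u) (av M w) = \adj (u%:M - M) *m w.
  by rewrite /av map_mxM map_mx_adj eval_Xm map_polyC_eval.
by rewrite -E [RHS]mxE.
Qed.

Lemma eval_qp (R : comNzRingType) N K (C : 'M[R]_(N,K)) (phat : 'cV[R]_N)
  (M : 'M[R]_K) (w : 'cV[R]_K) u n :
  (qp C phat M w n).[u] =
    (C *m (\adj (u%:M - M) *m w)) n 0 - phat n 0 * \det (u%:M - M).
Proof.
rewrite /qp hornerD hornerN hornerM hornerC eval_chi; congr (_ - _).
have E : map_mx (horner_eval u) (map_mx polyC C *m av M w) =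
    C *m (\adj (u%:M - M) *m w).
  by rewrite map_mxM /av map_mxM map_mx_adj eval_Xm !map_polyC_eval.
by rewrite -E [in RHS]mxE.
Qed.

Lemma alg1 (R : fieldType) (d a : R) : d != 0 -> d^-1 * a = (a * d) * d^-1 ^+ 2.
Proof. by move=> hd; rewrite expr2 mulrA -(mulrA a) mulfV // mulr1 mulrC. Qed.

Lemma alg2 (R : fieldType) (d c P : R) : d != 0 ->
  d^-1 * c - P = ((c - P * d) * d) * d^-1 ^+ 2.
Proof.
move=> hd; rewrite -alg1 // mulrBr; congr (_ - _).
by rewrite mulrCA mulVf // mulr1.
Qed.

Lemma feas_of_eval (R : realFieldType) (N K : nat) (C : 'M[R]_(N,K))
  (phat : 'cV[R]_N) (M : 'M[R]_K) (w : 'cV[R]_K) (u : R) :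
  (char_poly M).[u] != 0 ->
  (forall k, 0 <= (av M w k 0 * char_poly M).[u]) ->
  (forall n, (qp C phat M w n * char_poly M).[u] <= 0) ->
  feas C phat M w u.
Proof.
move=> hd hk hn; set A := u%:M - M.
have dne : \det A != 0 by rewrite -eval_chi.
have hU : A \in unitmx by rewrite unitmxE unitfE.
exists (invmx A *m w); split; last by rewrite mulKVmx.
have Ep : invmx A *m w = (\det A)^-1 *: (\adj A *m w)
  by rewrite /invmx hU scalemxAl.
split.
- move=> k; rewrite Ep mxE; have := hk k; rewrite hornerM eval_av eval_chi => h.
  by rewrite alg1 //; apply: mulr_ge0 => //; apply: sqr_ge0.
- move=> n; rewrite Ep -scalemxAr mxE -subr_le0.
  have := hn n; rewrite hornerM eval_qp eval_chi => h.
  rewrite alg2 //; apply: mulr_le0_ge0 => //; apply: sqr_ge0.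
Qed.

Lemma root_prod_of (R : idomainType) (I : finType) (P : I -> {poly R}) i x :
  root (P i) x -> root (\prod_j P j) x.
Proof.
move=> /rootP h; apply/rootP; rewrite horner_prod (bigD1 i) //= h mul0r //.
Qed.

Definition Fp (R : idomainType) N K (C : 'M[R]_(N,K)) (phat : 'cV[R]_N)
  (M : 'M[R]_K) (w : 'cV[R]_K) : {poly R} :=
  char_poly M * (\prod_k (if av M w k 0 == 0 then 1 else av M w k 0)) *
  (\prod_n (if qp C phat M w n == 0 then 1 else qp C phat M w n)).

Lemma Fp_neq0 (R : idomainType) N K (C : 'M[R]_(N,K)) (phat : 'cV[R]_N)
  (M : 'M[R]_K) (w : 'cV[R]_K) : Fp C phat M w != 0.
Proof.
rewrite /Fp; apply: mulf_neq0; first apply: mulf_neq0.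
- exact: monic_neq0 (char_poly_monic M).
- by apply/prodf_neq0 => i _; case: ifPn; rewrite ?oner_neq0.
- by apply/prodf_neq0 => i _; case: ifPn; rewrite ?oner_neq0.
Qed.

Lemma rootF_chi (R : idomainType) N K (C : 'M[R]_(N,K)) (phat : 'cV[R]_N)
  (M : 'M[R]_K) (w : 'cV[R]_K) x :
  root (char_poly M) x -> root (Fp C phat M w) x.
Proof. by move=> h; rewrite /Fp !rootM h. Qed.

Lemma rootF_a (R : idomainType) N K (C : 'M[R]_(N,K)) (phat : 'cV[R]_N)
  (M : 'M[R]_K) (w : 'cV[R]_K) x k :
  av M w k 0 != 0 -> root (av M w k 0) x -> root (Fp C phat M w) x.
Proof.
move=> hn h; rewrite /Fp !rootM; apply/orP; left; apply/orP; right.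
apply: (root_prod_of (i := k)); by rewrite (negPf hn).
Qed.

Lemma rootF_q (R : idomainType) N K (C : 'M[R]_(N,K)) (phat : 'cV[R]_N)
  (M : 'M[R]_K) (w : 'cV[R]_K) x n :
  qp C phat M w n != 0 -> root (qp C phat M w n) x -> root (Fp C phat M w) x.
Proof.
move=> hn h; rewrite /Fp !rootM; apply/orP; right.
apply: (root_prod_of (i := n)); by rewrite (negPf hn).
Qed.

Lemma bound_p (R : realFieldType) N K (C : 'M[R]_(N,K)) (phat : 'cV[R]_N) p k :
  (forall n k, 0 <= C n k) -> (forall n, 0 < phat n 0) ->
  (exists n, C n k = 1) -> powset C phat p -> p k 0 <= \sum_n phat n 0.
Proof.
move=> hC hph [n hn] [hp0 hpC].
apply: le_trans (_ : phat n 0 <= _); last first.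
  rewrite (bigD1 n) //= lerDl; apply: sumr_ge0 => i _; exact: ltW.
apply: le_trans (hpC n); rewrite mxE (bigD1 k) //= hn mul1r lerDl.
by apply: sumr_ge0 => j _; apply: mulr_ge0.
Qed.

Lemma minpos (R : realFieldType) (I : finType) (f : I -> R) :
  (forall i, 0 < f i) -> exists2 d, 0 < d & forall i, d <= f i.
Proof.
move=> hf; exists (\big[Order.min/1]_i f i).
  by elim/big_ind: _ => // x y hx hy; rewrite lt_min hx hy.
move=> i; apply: ge_bigmin_seq => //; exact: mem_index_enum.
Qed.

Lemma stepL (R : rcfType) N K (C : 'M[R]_(N,K)) (phat : 'cV[R]_N)
  (M : 'M[R]_K) (w : 'cV[R]_K) (k0 : 'I_K) s r :
  (forall i j, 0 <= M i j) -> (forall k, 0 < w k 0) ->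
  (forall n k, 0 <= C n k) -> (forall k, exists n, C n k = 1) ->
  (forall n, 0 < phat n 0) ->
  feas C phat M w s -> r < s ->
  (forall x, r < x <= s -> ~~ root (Fp C phat M w) x) -> feas C phat M w r.
Proof.
move=> hM hw hC hCcol hph [p [pP hA]] rs hnr.
have [hs0 hpp hU hpdef] := feasP k0 hM hw pP hA.
set chi := char_poly M.
have dne : chi.[s] != 0 by rewrite eval_chi -unitfE -unitmxE.
have Ep : p = (chi.[s])^-1 *: (\adj (s%:M - M) *m w).
  by rewrite hpdef /invmx hU scalemxAl eval_chi.
have hG k u : r <= u <= s -> 0 <= (av M w k 0 * chi).[u].
  have hGs : 0 < (av M w k 0 * chi).[s].
    have hsq : 0 < chi.[s]^-1 ^+ 2.
      by rewrite lt_def sqr_ge0 andbT expf_neq0 // invr_eq0.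
    by have := hpp k; rewrite Ep mxE alg1 // hornerM eval_av pmulr_lgt0.
  have hnz : av M w k 0 != 0.
    by apply/eqP => e; move: hGs; rewrite e mul0r horner0 ltxx.
  move=> hu.
  have HR : forall x, r < x <= s -> ~~ root (av M w k 0 * chi) x.
    move=> x hx; rewrite rootM; apply/negP => /orP [h|h].
    - by move: (hnr x hx); rewrite (rootF_a C phat hnz h).
    - by move: (hnr x hx); rewrite (rootF_chi C phat w h).
  by have [h1 _] := sign_helper HR hGs hu.
have hQ n u : r <= u <= s -> (qp C phat M w n * chi).[u] <= 0.
  have hQs : (qp C phat M w n * chi).[s] <= 0.
    have hsq : 0 < chi.[s]^-1 ^+ 2.
      by rewrite lt_def sqr_ge0 andbT expf_neq0 // invr_eq0.
    case: pP => _ /(_ n); rewrite Ep -scalemxAr mxE -subr_le0 alg2 //.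
    by rewrite pmulr_lle0 // hornerM eval_qp -eval_chi.
  have [q0|qn0] := eqVneq (qp C phat M w n) 0.
    by rewrite q0 mul0r horner0.
  move=> hu.
  have HR : forall x, r < x <= s -> ~~ root (qp C phat M w n * chi) x.
    move=> x hx; rewrite rootM; apply/negP => /orP [h|h].
    - by move: (hnr x hx); rewrite (rootF_q qn0 h).
    - by move: (hnr x hx); rewrite (rootF_chi C phat w h).
  exact: (sign_helperN HR hQs hu).
have hfu u : r < u <= s -> feas C phat M w u.
  move=> /andP [ru us]; apply: feas_of_eval.
  - apply/negP => h; have hr : root (char_poly M) u by [].
    by have := hnr u; rewrite ru us (rootF_chi C phat w hr) => /(_ isT).
  - by move=> k; apply: hG; rewrite (ltW ru) us.
  - by move=> n; apply: hQ; rewrite (ltW ru) us.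
have [d hd0 hdw] := minpos hw.
set B1 := \sum_n phat n 0 + 1.
have hB1 : 0 < B1.
  by rewrite /B1 ltr_wpDl // sumr_ge0 // => n _; apply: ltW.
set e := Num.min (s - r) (d / (B1 + B1)).
have he0 : 0 < e by rewrite lt_min subr_gt0 rs divr_gt0 // addr_gt0.
have hes : e <= s - r by rewrite /e ge_min lexx.
have heB : e * B1 < d.
  have h1 : e * (B1 + B1) <= d.
    have hed : e <= d / (B1 + B1).
      by rewrite /e ge_min; apply/orP; right.
    by move: hed; rewrite ler_pdivlMr // addr_gt0.
  apply: lt_le_trans h1; rewrite ltr_pM2l // ltrDl //.
set u := r + e.
have ru : r < u by rewrite /u ltrDl.
have us : u <= s by rewrite /u -lerBrDl.
have [x [xP hAx]] := hfu u (introT andP (conj ru us)).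
have [_ hxp _ _] := feasP k0 hM hw xP hAx.
have hxB k : x k 0 <= B1.
  apply: le_trans (bound_p hC hph (hCcol k) xP) _; by rewrite lerDl.
have hAr k : 0 < ((r%:M - M) *m x) k 0.
  have := congr1 (fun A : 'cV[R]_K => A k 0) hAx; rewrite /= AmulE /u => E.
  have E2 : ((r%:M - M) *m x) k 0 = w k 0 - e * x k 0.
    by rewrite AmulE -E mulrDl addrAC addrK.
  rewrite E2 subr_gt0; apply: le_lt_trans (_ : e * B1 < _); last first.
    exact: lt_le_trans heB (hdw k).
  by rewrite ler_wpM2l // ltW.
have hUr := unitPL hM hxp hAr.
apply: feas_of_eval.
- by rewrite eval_chi -unitfE -unitmxE.
- by move=> k; apply: hG; rewrite lexx ltW.
- by move=> n; apply: hQ; rewrite lexx ltW.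
Qed.

Lemma exists_min_feas (R : rcfType) N K (C : 'M[R]_(N,K)) (phat : 'cV[R]_N)
  (M : 'M[R]_K) (w : 'cV[R]_K) (k0 : 'I_K) :
  (forall i j, 0 <= M i j) -> (forall k, 0 < w k 0) ->
  (forall n k, 0 <= C n k) -> (forall k, exists n, C n k = 1) ->
  (forall n, 0 < phat n 0) ->
  (exists s0, feas C phat M w s0) ->
  exists s, feas C phat M w s /\ forall s', feas C phat M w s' -> s <= s'.
Proof.
move=> hM hw hC hCcol hph [s0 hs0].
set F := Fp C phat M w.
have [l hl] := roots_list (Fp_neq0 C phat M w).
have claim : forall s, feas C phat M w s ->
    exists r, [/\ feas C phat M w r, root F r & r <= s].
  move=> s hs.
  have hspos : 0 < s.
    by case: hs => p [pP hA]; case: (feasP k0 hM hw pP hA).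
  case: (boolP (root F s)) => hr; first by exists s.
  have [[x0 hx0]|nb] := classic (exists x, x < s /\ root F x).
  - have [r0 [[r0s rr0] hmax]] :=
      @max_in_list R (fun x => x < s /\ root F x) l (fun x h => hl x h.2)
        (ex_intro _ x0 hx0).
    exists r0; split => //; last exact: ltW.
    apply: (stepL k0 hM hw hC hCcol hph hs r0s) => x /andP [r0x xs].
    apply/negP => hxF.
    case: (eqVneq x s) => [e|ne]; first by move: hr; rewrite -e hxF.
    have xs' : x < s by rewrite lt_neqAle ne xs.
    by have := hmax x (conj xs' hxF); rewrite leNgt r0x.
  - exfalso.
    have m1s : -1 < s by rewrite (lt_trans _ hspos) // oppr_lt0 ltr01.
    have : feas C phat M w (-1).
      apply: (stepL k0 hM hw hC hCcol hph hs m1s) => x /andP [_ xs].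
      apply/negP => hxF.
      case: (eqVneq x s) => [e|ne]; first by move: hr; rewrite -e hxF.
      by apply: nb; exists x; split=> //; rewrite lt_neqAle ne xs.
    case=> p [pP hA]; case: (feasP k0 hM hw pP hA).
    by rewrite oppr_gt0 ltr10.
have [r [hr1 hr2 _]] := claim s0 hs0.
have [m [[fm rm] hmin]] := @min_in_list R (fun x => feas C phat M w x /\ root F x)
  l (fun x h => hl x h.2) (ex_intro _ r (conj hr1 hr2)).
exists m; split=> // s' hs'.
have [r' [f' ro' le']] := claim s' hs'.
exact: le_trans (hmin r' (conj f' ro')) le'.
Qed.

Lemma GamE (R : realFieldType) K (gamma : 'I_K -> R) m (x : 'M[R]_(K,m)) k j :
  (Gammamx gamma *m x) k j = gamma k * x k j.
Proof. by rewrite /Gammamx mul_diag_mx !mxE. Qed.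

Lemma Aentry (R : realFieldType) K (gamma : 'I_K -> R) (V : 'M[R]_K) s
  (q : 'cV[R]_K) k :
  ((s%:M - Gammamx gamma *m V) *m q) k 0 = s * q k 0 - gamma k * (V *m q) k 0.
Proof. by rewrite mulmxBl mul_scalar_mx -mulmxA mxE [(s *: q) k 0]mxE [(- (_ : 'cV[R]_K)) k 0]mxE GamE. Qed.

Lemma minval_le (R : realFieldType) n (f : 'I_n -> R) i : minval f <= f i.
Proof. apply: ge_bigmin_seq => //; exact: mem_index_enum. Qed.

Lemma minval_const (R : realFieldType) n (f : 'I_n -> R) (i0 : 'I_n) c :
  (forall i, f i = c) -> minval f = c.
Proof.
move=> hf; apply/le_anti; rewrite -{1}(hf i0) minval_le /=.
apply: le_bigmin => [|i _]; last by rewrite hf.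
by rewrite -(hf i0); apply: le_bigmax_seq => //; exact: mem_index_enum.
Qed.

Lemma SIR_ge (R : realFieldType) K (V : 'M[R]_K) (z : 'cV[R]_K)
  (gamma : 'I_K -> R) (q : 'cV[R]_K) k c :
  0 < c -> 0 < gamma k -> 0 < (V *m q) k 0 + z k 0 ->
  (c <= SIR V z q k / gamma k) =
  (gamma k * z k 0 <= c^-1 * q k 0 - gamma k * (V *m q) k 0).
Proof.
move=> hc hg hD; rewrite /SIR ler_pdivlMr // ler_pdivlMr //.
by rewrite lerBrDr -mulrDr [z k 0 + _]addrC ler_pdivlMl // mulrA.
Qed.

Lemma subE (R : zmodType) m n (A B : 'M[R]_(m,n)) i j :
  (A - B) i j = A i j - B i j.
Proof. by rewrite !mxE. Qed.

Unset Implicit Arguments.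
Set Strict Implicit.

Theorem mainTheorem2 (R : rcfType) (K N : nat) (hK : (2 <= K)%N)
  (C : 'M[R]_(N, K)) (hC01 : forall n k, C n k = 0 \/ C n k = 1)
  (hCcol : forall k, exists n, C n k = 1)
  (phat : 'cV[R]_N) (hphat : forall n, 0 < phat n 0)
  (V : 'M[R]_K) (hVnn : forall k l, 0 <= V k l) (hVdiag : forall k, V k k = 0)
  (z : 'cV[R]_K) (hz : forall k, 0 < z k 0)
  (gamma : 'I_K -> R) (hgamma : forall k, 0 < gamma k)
  (hirr : irreducible_mx V) :
  exists pbar : 'cV[R]_K,
    [/\ powset C phat pbar /\
          (forall p, powset C phat p ->
             balance_obj V z gamma p <= balance_obj V z gamma pbar),
        (forall p, powset C phat p ->
           (forall q, powset C phat q ->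
              balance_obj V z gamma q <= balance_obj V z gamma p) ->
           p = pbar),
        (exists t' : R,
           [/\ 0 < t',
               (exists p, powset C phat p /\
                  Amx V gamma t' *m p = Gammamx gamma *m z),
               (forall t, 0 < t ->
                  (exists p, powset C phat p /\
                     Amx V gamma t *m p = Gammamx gamma *m z) -> t <= t'),
               Amx V gamma t' \in unitmx &
               pbar = invmx (Amx V gamma t') *m (Gammamx gamma *m z)])
      & forall k, 0 < pbar k 0].
Proof.
set M := Gammamx gamma *m V.
set w := Gammamx gamma *m z.
have k0 : 'I_K := Ordinal (ltn_trans (ltnSn 0) hK).
have hM i j : 0 <= M i j by rewrite /M GamE mulr_ge0 // ltW.
have hw k : 0 < w k 0 by rewrite /w GamE mulr_gt0.
have hC n k : 0 <= C n k by case: (hC01 n k) => ->; rewrite ?ler01.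
have hC1 n k : C n k <= 1 by case: (hC01 n k) => ->; rewrite ?ler01.
have hex : exists s0, feas C phat M w s0.
  have [dP hdP hdPle] := minpos (f := fun n => phat n 0) hphat.
  have hK0 : 0 < K%:R :> R by rewrite ltr0n (ltn_trans (ltnSn 0) hK).
  set dp := dP / K%:R.
  have hdp : 0 < dp by rewrite divr_gt0.
  set p0 : 'cV[R]_K := const_mx dp.
  have hp0k k : p0 k 0 = dp by rewrite mxE.
  have p0P : powset C phat p0.
    split=> [k|n]; first by rewrite hp0k ltW.
    rewrite mxE; apply: le_trans (hdPle n).
    apply: le_trans (_ : \sum_(j < K) dp <= _).
      by apply: ler_sum => j _; rewrite hp0k; apply: ler_piMl; [exact: ltW | exact: hC1].
    by rewrite sumr_const card_ord -mulr_natr /dp divfK // gt_eqF.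
  pose T k := \sum_j M k j * p0 j 0 + w k 0.
  have hT k : 0 <= T k.
    apply: addr_ge0; last exact: ltW.
    by apply: sumr_ge0 => j _; rewrite hp0k mulr_ge0 // ltW.
  exists ((\sum_k T k) / dp).
  apply: (geq_feas hM hw hC p0P) => k.
  rewrite AmulE hp0k divfK ?gt_eqF // lerBrDr addrC.
  by rewrite -/(T k) [X in _ <= X](bigD1 k) //= lerDl sumr_ge0.
have [s [hfs hmin]] := exists_min_feas k0 hM hw hC hCcol hphat hex.
case: (hfs) => p [pP hA].
have [hs0 hpp hU hpdef] := feasP k0 hM hw pP hA.
have hD q : powset C phat q -> forall k, 0 < (V *m q) k 0 + z k 0.
  move=> [hq _] k; apply: ltr_wpDl (hz k).
  by rewrite mxE sumr_ge0 // => j _; apply: mulr_ge0.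
have Ek k : s * p k 0 - gamma k * (V *m p) k 0 = gamma k * z k 0.
  by have := congr1 (fun A : 'cV[R]_K => A k 0) hA; rewrite /= Aentry /w GamE.
have obj_p : balance_obj V z gamma p = s^-1.
  apply: (minval_const k0) => k.
  have hDk := hD p pP k.
  rewrite /SIR.
  have -> : p k 0 = s^-1 * gamma k * ((V *m p) k 0 + z k 0).
    rewrite -mulrA mulrDr -Ek addrC subrK mulrA mulVf ?gt_eqF // mul1r //.
  by rewrite mulfK ?gt_eqF // mulfK ?gt_eqF.
have opt q : powset C phat q -> balance_obj V z gamma q <= s^-1.
  move=> qP; set c := balance_obj V z gamma q.
  have [cle|cgt] := lerP c 0.
    by apply: le_trans cle _; rewrite ltW // invr_gt0.
  have hfc : feas C phat M w c^-1.
    apply: (geq_feas hM hw hC qP) => k.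
    rewrite Aentry /w GamE -SIR_ge //; last exact: hD.
    exact: minval_le.
  have := hmin _ hfc.
  by rewrite -[c in c <= _]invrK lef_pV2 ?posrE ?invr_gt0.
exists p; split.
- split => // q qP; rewrite obj_p; exact: opt.
- move=> q qP hq.
  have hle : s^-1 <= balance_obj V z gamma q by rewrite -obj_p; apply: hq.
  have hAq k : w k 0 <= ((s%:M - M) *m q) k 0.
    rewrite Aentry /w GamE.
    have := le_trans hle (minval_le _ k).
    by rewrite SIR_ge ?invr_gt0 ?invrK //; apply: hD.
  set y := q - p.
  have hAy k : 0 <= ((s%:M - M) *m y) k 0.
    by rewrite /y mulmxBr hA subE subr_ge0.
  have hAp k : 0 < ((s%:M - M) *m p) k 0 by rewrite hA.
  have hy0 := PL hM hpp hAp hAy.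
  have [y0|ynz] := eqVneq y 0.
    by apply/eqP; rewrite -subr_eq0 -/y y0.
  exfalso.
  have ypos : forall k, 0 < y k 0.
    apply: NNPP => hneg; apply: hirr; exists [set k | y k 0 == 0]; split.
    - have [k hk] := not_all_ex_not _ _ hneg.
      apply/set0Pn; exists k; rewrite inE eq_le hy0 andbT leNgt.
      by apply/negP.
    - apply/negP => /eqP hT; move/eqP: ynz; apply; apply/matrixP => i j.
      rewrite (ord1 j) [RHS]mxE.
      have : i \in [set k | y k 0 == 0] by rewrite hT inE.
      by rewrite inE => /eqP.
    - move=> k l; rewrite !inE => /eqP yk0 ylnz.
      have := hAy k; rewrite AmulE yk0 mulr0 sub0r oppr_ge0 => hsum.
      have hterms : forall j, true -> 0 <= M k j * y j 0.
        by move=> j _; apply: mulr_ge0.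
      have hs0' : \sum_j M k j * y j 0 = 0 by apply/le_anti; rewrite hsum sumr_ge0.
      have := psumr_eq0P hterms hs0' (i := l) isT.
      move/eqP; rewrite /M GamE !mulf_eq0 (gt_eqF (hgamma k)) (negPf ylnz) /= orbF.
      by move/eqP.
  have slack n : (C *m p) n 0 < phat n 0.
    have [[k hk]|nk] := classic (exists k, C n k = 1).
    - case: qP => _ /(_ n) hq'.
      have E : (C *m p) n 0 = (C *m q) n 0 - (C *m y) n 0.
        by rewrite /y mulmxBr subE subKr.
      have hCy : 0 < (C *m y) n 0.
        apply: lt_le_trans (ypos k) _; rewrite [(C *m y) n 0]mxE (bigD1 k) //= hk mul1r lerDl.
        by apply: sumr_ge0 => j _; apply: mulr_ge0 => //; apply: ltW.
      rewrite E; apply: lt_le_trans hq'.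
      by rewrite gtrDl oppr_lt0.
    - have -> : (C *m p) n 0 = 0.
        rewrite mxE big1 // => j _.
        have -> : C n j = 0 by case: (hC01 n j) => // h; case: nk; exists j.
        by rewrite mul0r.
      exact: hphat.
  have hpos1 n : 0 < (phat n 0 - (C *m p) n 0) / phat n 0.
    by rewrite divr_gt0 // subr_gt0.
  have [eta heta0 hetale] := minpos hpos1.
  have hpos2 k : 0 < w k 0 / p k 0 by rewrite divr_gt0.
  have [th hth0 hthle] := minpos hpos2.
  set lam := 1 + eta.
  have hlam : 0 < lam by rewrite /lam addr_gt0.
  set s' := s - th * eta / lam.
  have hs's : s' < s.
    by rewrite /s' gtrDl oppr_lt0 divr_gt0 // mulr_gt0.
  set ph := lam *: p.
  have phP : powset C phat ph.
    split => [k|n].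
    - by rewrite mxE mulr_ge0 // ltW // (hpp k).
    - rewrite -scalemxAr mxE.
      have h1 : eta * phat n 0 <= phat n 0 - (C *m p) n 0.
        by rewrite -ler_pdivlMr.
      have hCp0 : 0 <= (C *m p) n 0.
        rewrite mxE; apply: sumr_ge0 => j _; apply: mulr_ge0 => //; exact: ltW.
      have hCpP : (C *m p) n 0 <= phat n 0 := ltW (slack n).
      rewrite /lam mulrDl mul1r addrC -lerBrDr.
      apply: le_trans _ h1; by rewrite ler_pM2l.
  have : feas C phat M w s'.
    apply: (geq_feas hM hw hC phP) => k.
    have Ek' : s * p k 0 - \sum_j M k j * p j 0 = w k 0.
      by have := congr1 (fun A : 'cV[R]_K => A k 0) hA; rewrite /= AmulE.
    have E : ((s'%:M - M) *m ph) k 0 = lam * w k 0 - th * eta * p k 0.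
      rewrite -scalemxAr mxE AmulE /s' mulrBl addrAC Ek' mulrBr.
      congr (_ - _); rewrite mulrA; congr (_ * _).
      by rewrite mulrC divfK ?gt_eqF.
    rewrite E /lam mulrDl mul1r -addrA lerDl subr_ge0.
    rewrite mulrAC [eta * _]mulrC; apply: ler_wpM2r; first exact: ltW.
    by rewrite -ler_pdivlMr.
  by move/hmin; rewrite leNgt hs's.
- exists s^-1; split.
  + by rewrite invr_gt0.
  + by exists p; split => //; rewrite /Amx invrK.
  + move=> t ht [q [qP hq]].
    have hf : feas C phat M w t^-1 by exists q; split => //; move: hq; rewrite /Amx.
    have := hmin _ hf.
    by rewrite -[t in t <= _]invrK lef_pV2 ?posrE ?invr_gt0.
  + by rewrite /Amx invrK.
  + by rewrite /Amx invrK.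
- exact: hpp.
Qed.
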